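(* Let $n>1$, $1\le k\le\lceil\log_2 n\rceil$ and $p\in[0,1]$. Any (possibly randomized) algorithm for Locate that runs in $k$ rounds and succeeds with probability at least $p$ on every input of size $n$ issues, on its worst-case input, at least $\frac{k}{4e}\,p\,n^{1/k}-1-pk$ queries in expectation.
   Context: Locate problem in the rank query model: there is a vector $\vec{x}=(x_1,\ldots,x_n)$ whose ranks form an unknown permutation of $\{1,\ldots,n\}$; an index $i$ is given and the goal is to output $\mathrm{rank}(x_i)$. Queries have the form ''How is $\mathrm{rank}(x_j)$ compared to $m$?'', with answer ''$<$'', ''$=$'' or ''$>$''. An algorithm runs in $k$ rounds if in each of $k$ rounds it submits a set of queries chosen depending only on answers of earlier rounds (and its randomness), then receives all answers. A randomized algorithm is a distribution over deterministic algorithms; the expectation is over its randomness. *)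

(* Defs.v *)
From HB Require Import structures.
From mathcomp Require Import all_boot all_order all_algebra all_fingroup.
From mathcomp Require Import all_classical all_reals all_analysis.
Set Implicit Arguments. Unset Strict Implicit. Unset Printing Implicit Defensive.

(* Ranks: the input vector x of length n is described by a permutation
   sigma : 'S_n ; rank(x_j) = (sigma j).+1 \in {1,..,n}.  The given index is
   i : 'I_n. *)

Definition rank_of (n : nat) (s : 'S_n) (j : 'I_n) : nat := (s j).+1.

Definition query (n : nat) := ('I_n * nat)%type.

Definition answer (n : nat) (s : 'S_n) (q : query n) : comparison :=
  let r := rank_of s q.1 in
  if r < q.2 then Lt else if r == q.2 then Eq else Gt.

Definition transcript (n : nat) := seq (seq (query n * comparison)).

Record det_alg (n : nat) := DetAlg {
  next_queries : 'I_n -> transcript n -> seq (query n);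
  output : 'I_n -> transcript n -> nat }.

Fixpoint run (n : nat) (A : det_alg n) (s : 'S_n) (i : 'I_n) (r : nat)
  : transcript n :=
  match r with
  | 0 => [::]
  | r'.+1 => let t := run A s i r' in
             rcons t [seq (q, answer s q) | q <- next_queries A i t]
  end.

Definition cost (n : nat) (A : det_alg n) (k : nat) (s : 'S_n) (i : 'I_n) : nat :=
  sumn [seq size b | b <- run A s i k].

Definition succeeds (n : nat) (A : det_alg n) (k : nat) (s : 'S_n) (i : 'I_n)
  : bool :=
  output A i (run A s i k) == rank_of s i.

(* Main.v *)
Require Import Defs.
From HB Require Import structures.
From mathcomp Require Import all_boot all_order all_algebra all_fingroup.
From mathcomp Require Import all_classical all_reals all_analysis.
From mathcomp Require Import measurable_realfun lebesgue_integral_nonneg.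
From mathcomp Require Import ring lra zify.
Import Order.TTheory GRing.Theory Num.Theory.
Set Implicit Arguments. Unset Strict Implicit. Unset Printing Implicit Defensive.
Lemma sub_in_count' (T : eqType) (a b : pred T) (s : seq T) :
  (forall x, x \in s -> b x -> a x) -> count b s <= count a s.
Proof.
elim: s => [//|y s IH] hab /=; apply: leq_add; last first.
  by apply: IH => x xs; apply: hab; rewrite inE xs orbT.
by case by_: (b y) => //; rewrite (hab y (mem_head _ _) by_).
Qed.

Lemma count_imp_eq (T : eqType) (a b : pred T) (s : seq T) :
  (forall x, x \in s -> b x -> a x) -> count a s = count b s ->
  forall x, x \in s -> a x = b x.
Proof.
elim: s => [//|y s IH] hab /=.
have hab' : forall x, x \in s -> b x -> a x.
  by move=> x xs; apply: hab; rewrite inE xs orbT.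
have := sub_in_count' hab'.
case ay: (a y); case by_: (b y) => /=.
- move=> _ /eqP; rewrite eqn_add2l => /eqP hc x; rewrite inE => /orP[/eqP->|xs].
    by rewrite ay by_.
  exact: IH.
- move=> hle hc; move: hle; rewrite -[count b s]add0n -hc; lia.
- by move: (hab y (mem_head _ _)); rewrite by_ ay => /(_ isT).
- move=> _ /eqP; rewrite eqn_add2l => /eqP hc x; rewrite inE => /orP[/eqP->|xs].
    by rewrite ay by_.
  exact: IH.
Qed.

Definition Us n (i : 'I_n) (Q : seq (query n)) : seq nat :=
  [seq (if q.1 == i then q.2.-1 else val q.1) | q <- Q].
Definition Ts n (i : 'I_n) (Q : seq (query n)) : seq nat :=
  [seq q.2 | q <- Q & q.1 == i].
Definition cnt (T : seq nat) (r : nat) := count (fun th => r.+1 < th) T.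
Definition key n (i : 'I_n) (Q : seq (query n)) (r : 'I_n) : nat :=
  if val r \in Us i Q then (size (Ts i Q)).+1 + r else cnt (Ts i Q) r.

Lemma cnt_eq (T : seq nat) r r' : cnt T r = cnt T r' ->
  forall th, th \in T -> (r.+1 < th) = (r'.+1 < th).
Proof.
wlog le : r r' / r <= r'.
  move=> W h th thT; have [/W|/ltnW/W] := leqP r r'; first by move/(_ h); apply.
  by move=> W'; rewrite (W' (esym h)).
move=> h; apply: count_imp_eq h => th _ /=; lia.
Qed.

Lemma key_ans n (i : 'I_n) (Q : seq (query n)) (r r' : 'I_n) :
  key i Q r = key i Q r' ->
  forall q, q \in Q -> answer (tperm i r) q = answer (tperm i r') q.
Proof.
move=> hk [j m] qQ; rewrite /answer /rank_of /=.
have cntle r0 : cnt (Ts i Q) r0 <= size (Ts i Q) := count_size _ _.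
have jU : (if j == i then m.-1 else val j) \in Us i Q.
  by apply/mapP; exists (j, m).
case hr: (val r \in Us i Q); case hr': (val r' \in Us i Q); move: hk;
   rewrite /key hr hr'.
- by move/addnI => /val_inj ->.
- by move=> h; move: (cntle r'); rewrite -h; lia.
- by move=> h; move: (cntle r); rewrite h; lia.
move=> hc.
case: (eqVneq j i) => [eji|ji].
  subst j; rewrite !tpermL.
  have mT : m \in Ts i Q by apply/mapP; exists (i, m); rewrite // mem_filter eqxx.
  rewrite eqxx in jU.
  have ne (r0 : 'I_n) : val r0 \in Us i Q = false -> (r0.+1 == m) = false.
    move=> h; apply/negbTE/eqP => e; move: jU; rewrite -e /= h //.
  by rewrite (ne _ hr) (ne _ hr') (cnt_eq hc mT).
rewrite (negbTE ji) in jU.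
rewrite !tpermD // ?(eq_sym i) //; apply/eqP => e; subst j.
  by move: hr hr'; rewrite ?jU.
by move: hr hr'; rewrite ?jU.
Qed.

Definition sz n (t : transcript n) : nat := sumn [seq size b | b <- t].
Definition stp n (D : det_alg n) (i r : 'I_n) (t : transcript n) : transcript n :=
  rcons t [seq (q, answer (tperm i r) q) | q <- next_queries D i t].

Lemma sz_stp n (D : det_alg n) i r t :
  sz (stp D i r t) = (sz t + size (next_queries D i t))%N.
Proof. by rewrite /sz /stp map_rcons sumn_rcons size_map. Qed.

Lemma stp_key n (D : det_alg n) i t (r r' : 'I_n) :
  key i (next_queries D i t) r = key i (next_queries D i t) r' ->
  stp D i r t = stp D i r' t.
Proof.
move=> h; rewrite /stp; congr rcons; apply/eq_in_map => q qQ.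
by rewrite (key_ans h qQ).
Qed.

Lemma keys_size n (i : 'I_n) (Q : seq (query n)) (X : {set 'I_n}) :
  (size (undup (map (key i Q) (enum X))) <= (size Q).*2.+1)%N.
Proof.
have -> : (size Q).*2.+1 = ((size Q).+1 + size Q)%N by rewrite -addnn addSn.
have hT : (size (Ts i Q) <= size Q)%N by rewrite size_map size_filter count_size.
apply: (@leq_trans (size (iota 0 (size (Ts i Q)).+1 ++
                          map (addn (size (Ts i Q)).+1) (Us i Q)))).
  apply: uniq_leq_size; first exact: undup_uniq.
  move=> c; rewrite mem_undup => /mapP[r _ ->]; rewrite mem_cat /key.
  case: ifP => rU.
    by rewrite (map_f (addn _) rU) orbT.
  by rewrite mem_iota add0n ltnS count_size.
by rewrite size_cat size_iota size_map /Us size_map leq_add2r ltnS.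
Qed.

Local Open Scope ring_scope.

Lemma partition_key (R : nmodType) (I : finType) (X : {set I}) (k : I -> nat)
   (F : I -> R) :
  \sum_(r in X) F r =
  \sum_(c <- undup (map k (enum X))) \sum_(r in X | k r == c) F r.
Proof.
under [RHS]eq_bigr do rewrite big_mkcondr /=.
rewrite exchange_big /=; apply: eq_bigr => r rX.
rewrite -big_mkcond /= big_const_seq.
rewrite (@eq_count _ _ (pred1 (k r))); last by move=> c; rewrite /= eq_sym.
rewrite count_uniq_mem; last exact: undup_uniq.
by rewrite mem_undup map_f ?mem_enum //= addr0.
Qed.

Lemma polyAGM (R : realDomainType) (x y : R) (k : nat) : 0 <= x -> 0 <= y ->
  x ^+ k * (k.+1%:R * y - k%:R * x) <= y ^+ k.+1.
Proof.
move=> x0 y0.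
rewrite -subr_ge0.
have -> : y ^+ k.+1 - x ^+ k * (k.+1%:R * y - k%:R * x) =
   (y ^+ k.+1 - x ^+ k.+1) - (y - x) * \sum_(j < k.+1) x ^+ k.
  rewrite sumr_const card_ord -mulr_natr !exprS -[k.+1]addn1 natrD; ring.
rewrite subrXX -mulrBr -sumrB mulr_sumr sumr_ge0 // => j _.
have -> : (y - x) * (y ^+ (k - j) * x ^+ j - x ^+ k) =
          x ^+ j * ((y - x) * (y ^+ (k - j) - x ^+ (k - j))).
  have hj : x ^+ k = x ^+ (k - j) * x ^+ j.
    by rewrite -exprD subnK // -ltnS.
  rewrite hj; ring.
apply: mulr_ge0; first exact: exprn_ge0.
have [xy|yx] := leP x y.
  apply: mulr_ge0; first by rewrite subr_ge0.
  by rewrite subr_ge0 lerXn2r // nnegrE.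
apply: mulr_le0; first by rewrite subr_le0 ltW.
by rewrite subr_le0 lerXn2r // ?nnegrE // ltW.
Qed.
Lemma classL (R : realFieldType) (c0 x y S : R) (k : nat) :
  0 < c0 -> 0 <= x -> 0 <= y -> 0 <= S -> S <= x ^+ k ->
  - (y ^+ k.+1 / c0) <= S * (k%:R / c0 * x + 1 - k.+1%:R / c0 * y).
Proof.
move=> c0p x0 y0 S0 Sx.
set B := _ - _.
have [B0|B0] := leP 0 B.
  apply: (@le_trans _ _ 0); last exact: mulr_ge0.
  by rewrite oppr_le0 divr_ge0 ?exprn_ge0 // ltW.
apply: (@le_trans _ _ (x ^+ k * B)); last by rewrite ler_wnM2r // ltW.
have h := polyAGM k x0 y0.
have -> : x ^+ k * B = (x ^+ k * (k.+1%:R * y - k%:R * x)) * (- c0^-1) + x ^+ k.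
  rewrite /B; field; exact: lt0r_neq0.
rewrite -[X in X <= _]addr0 lerD ?exprn_ge0 //.
rewrite mulrN lerN2; apply: ler_wpM2r => //; by rewrite invr_ge0 ltW.
Qed.

Lemma stepL (R : realFieldType) (c0 x y : R) (k : nat) :
  1 <= c0 -> 0 <= x -> 0 <= y -> (1 <= k)%N -> x ^+ k = y ^+ k.+1 ->
  0 <= k%:R / c0 * x + 1 - k.+1%:R / c0 * y.
Proof.
move=> c01 x0 y0 k1 exy.
have c0p : 0 < c0 by apply: lt_le_trans c01.
have [x00|xp] := eqVneq x 0.
  subst x; move: exy; rewrite expr0n -[k]prednK //= => /esym/eqP.
  rewrite expf_eq0 /= => /eqP ->; rewrite !mulr0 subr0 add0r //.
have xkp : 0 < x ^+ k by rewrite exprn_gt0 // lt0r xp.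
have h := polyAGM k x0 y0.
rewrite -exy -{2}[x ^+ k]mulr1 ler_pM2l // in h.
have : k.+1%:R * y - k%:R * x <= c0 by apply: le_trans c01.
move=> h2.
have -> : k%:R / c0 * x + 1 - k.+1%:R / c0 * y = (c0 - (k.+1%:R * y - k%:R * x)) / c0.
  field; exact: lt0r_neq0.
by rewrite divr_ge0 ?subr_ge0 // ltW.
Qed.

Lemma lin_sum (R : comRingType) (s : seq nat) (A B : R) (f g : nat -> R) :
  \sum_(c <- s) (A * f c - g c - B * f c) =
  A * \sum_(c <- s) f c - \sum_(c <- s) g c - B * \sum_(c <- s) f c.
Proof.
elim: s => [|a s IH]; first by rewrite !big_nil; ring.
rewrite !big_cons IH; ring.
Qed.

Lemma lin_sum2 (R : comRingType) (s : seq nat) (A B a : R) (f g : nat -> R) :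
  \sum_(c <- s) (f c - g c * A - g c * B + a) =
  \sum_(c <- s) f c - (\sum_(c <- s) g c) * A - (\sum_(c <- s) g c) * B
   + (size s)%:R * a.
Proof.
elim: s => [|b s IH]; first by rewrite !big_nil /= mul0r; ring.
rewrite !big_cons IH /= -[(size s).+1]addn1 natrD; ring.
Qed.

Lemma sum_ineq (R : realFieldType) (s : seq nat) (c0 y N c szt : R)
  (Nk Sk Ck x : nat -> R) (k : nat) :
  0 < c0 -> 0 <= y -> y ^+ k.+1 = N -> N = \sum_(q <- s) Nk q ->
  (forall q, q \in s -> [/\ 0 <= x q, 0 <= Sk q, Sk q <= x q ^+ k &
     k%:R / c0 * x q * Sk q - Nk q - k%:R * Sk q <= Ck q - Nk q * (szt + c)]) ->
  (size s)%:R * (N / c0) <= N * c ->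
  k.+1%:R / c0 * y * (\sum_(q <- s) Sk q) - N - k.+1%:R * (\sum_(q <- s) Sk q)
    <= \sum_(q <- s) Ck q - N * szt.
Proof.
move=> c0p y0 yN hN H hsz.
have step : forall q, q \in s ->
   k.+1%:R / c0 * y * Sk q - Nk q - k.+1%:R * Sk q <=
   (Ck q - Nk q * szt - Nk q * c) + N / c0.
  move=> q qs; have [x0 S0 Sx ih] := H q qs.
  have := classL c0p x0 y0 S0 Sx; rewrite yN => hc.
  have e1 : k.+1%:R / c0 * y * Sk q - Nk q - k.+1%:R * Sk q =
     (k%:R / c0 * x q * Sk q - Nk q - k%:R * Sk q)
     - Sk q * (k%:R / c0 * x q + 1 - k.+1%:R / c0 * y).
    rewrite -[k.+1]addn1 natrD; ring.
  rewrite e1; lra.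
rewrite (_ : k.+1%:R / c0 * y * _ - N - _ = \sum_(q <- s)
   (k.+1%:R / c0 * y * Sk q - Nk q - k.+1%:R * Sk q)); last by rewrite lin_sum -hN.
apply: (@le_trans _ _ (\sum_(q <- s) ((Ck q - Nk q * szt - Nk q * c) + N / c0))).
  rewrite big_seq [X in _ <= X]big_seq; apply: ler_sum => q qs; exact: step q qs.
rewrite lin_sum2 -hN; lra.
Qed.

Section Main.
Variables (R : realType) (c0 : R) (n : nat) (D : det_alg n) (i : 'I_n).
Hypothesis c03 : 3 <= c0.

Definition succ k r t : bool :=
  output D i (iter k (stp D i r) t) == rank_of (tperm i r) i.
Definition Cst k (X : {set 'I_n}) t : R := \sum_(r in X) (sz (iter k (stp D i r) t))%:R.
Definition Suc k (X : {set 'I_n}) t : R := \sum_(r in X) (succ k r t)%:R.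
Definition G k (N S : R) := k%:R / c0 * (N `^ (k%:R)^-1) * S - N - k%:R * S.
Definition Claim k (X : {set 'I_n}) t := G k #|X|%:R (Suc k X t) <= Cst k X t - #|X|%:R * (sz t)%:R.

Lemma Suc_ge0 k (X : {set 'I_n}) t : 0 <= Suc k X t.
Proof. by apply: sumr_ge0 => r _; rewrite ler0n. Qed.

Lemma Suc_le k (X : {set 'I_n}) t : Suc k X t <= #|X|%:R.
Proof.
rewrite -sumr_const; apply: ler_sum => r _.
by case: succ; rewrite /= ?mulr1n ?mulr0n ?ler01.
Qed.

Lemma powK (N : R) k : 0 <= N -> (1 <= k)%N -> (N `^ (k%:R)^-1) ^+ k = N.
Proof.
move=> N0 k1; rewrite -powR_mulrn ?powR_ge0 // -powRrM mulVf ?powRr1 //.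
by rewrite pnatr_eq0 -lt0n.
Qed.

Lemma part_set (F : 'I_n -> R) (X : {set 'I_n}) (kf : 'I_n -> nat) :
  \sum_(r in X) F r = \sum_(q <- undup (map kf (enum X)))
     \sum_(r in [set r in X | kf r == q]) F r.
Proof.
rewrite (partition_key _ kf); apply: eq_bigr => q _; apply: eq_bigl => r.
by rewrite inE.
Qed.

Lemma indic_le1 (A : {set 'I_n}) (b : 'I_n -> bool) :
  (forall r r', r \in A -> r' \in A -> b r -> b r' -> r = r') ->
  \sum_(r in A) (b r)%:R <= 1 :> R.
Proof.
move=> uniqb.
case: (pickP [pred r in A | b r]) => [r0 /andP[r0A br0] | none].
  rewrite (bigD1 r0) //= br0 big1 ?addr0 // => r /andP[rA rne].
  case br: (b r) => //; by rewrite (uniqb _ _ rA r0A br br0) eqxx in rne.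
rewrite big1 ?ler01 // => r rA; by have := none r; rewrite /= rA /= => ->.
Qed.


Lemma sum1_seq (s : seq nat) : \sum_(q <- s) (1 : R) = (size s)%:R.
Proof. elim: s => [|a s IH]; first by rewrite big_nil. by rewrite big_cons IH /= -natr1 addrC. Qed.

Lemma base X t : Claim 1 X t.
Proof.
rewrite /Claim /G /Cst.
set Q := next_queries D i t.
have hC : \sum_(r in X) (sz (iter 1 (stp D i r) t))%:R = #|X|%:R * (sz t + size Q)%:R :> R.
  rewrite (eq_bigr (fun _ => (sz t + size Q)%:R)); last by move=> r _; rewrite /= sz_stp.
  by rewrite sumr_const mulr_natl.
rewrite hC invr1 powRr1 ?ler0n //.
set S := Suc 1 X t. set N : R := #|X|%:R.
have S0 : 0 <= S := Suc_ge0 1 X t.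
have N0 : 0 <= N by rewrite ler0n.
have hS : S <= ((size Q).*2.+1)%:R.
  rewrite /S /Suc (part_set _ _ (key i Q)).
  apply: (@le_trans _ _ (\sum_(q <- undup (map (key i Q) (enum X))) 1)); last first.
    by rewrite sum1_seq ler_nat keys_size.
  rewrite big_seq [X in _ <= X]big_seq; apply: ler_sum => q _.
  apply: indic_le1 => r r' rX r'X.
  rewrite !inE in rX r'X; case/andP: rX => rX /eqP kr; case/andP: r'X => r'X /eqP kr'.
  rewrite /succ /= (@stp_key _ D i t r r'); last by rewrite -/Q kr kr'.
  move=> /eqP -> /eqP; rewrite /rank_of !tpermL => -[] e.
  by apply: val_inj.
move: hS; rewrite -[_.*2.+1]addn1 -addnn !natrD => hS.
set c : R := (size Q)%:R in hS *.
have c0p : 0 < c0 by apply: lt_le_trans c03; lra.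
have c0' : 0 <= c by rewrite ler0n.
have hSc : S / c0 <= c + 1.
  rewrite ler_pdivrMr //.
  have h1 : 0 <= (c + 1) * (c0 - 3).
    by apply: mulr_ge0; rewrite ?subr_ge0 ?addr_ge0.
  lra.
have hN := ler_wpM2l N0 hSc.
have e : 1 / c0 * N * S = N * (S / c0) by ring.
rewrite e; lra.
Qed.


Lemma step k X t : (1 <= k)%N -> (forall X t, Claim k X t) -> Claim k.+1 X t.
Proof.
move=> k1 IH.
set Q := next_queries D i t.
have c0p : 0 < c0 by apply: lt_le_trans c03; lra.
have [Q0|Qn0] := eqVneq (size Q) 0%N.
  set t' := rcons t [::].
  have hstp r : stp D i r t = t' by rewrite /stp -/Q (size0nil Q0).
  have hC : Cst k.+1 X t = Cst k X t'.
    by apply: eq_bigr => r _; rewrite iterSr hstp.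
  have hS : Suc k.+1 X t = Suc k X t'.
    by apply: eq_bigr => r _; rewrite /succ iterSr hstp.
  have hsz : sz t' = sz t by rewrite /t' /sz map_rcons sumn_rcons addn0.
  have := IH X t'; rewrite /Claim hC hS hsz; apply: le_trans.
  rewrite /G.
  set N : R := #|X|%:R.
  have N0 : 0 <= N by rewrite ler0n.
  set S := Suc k X t'.
  have S0 : 0 <= S := Suc_ge0 k X t'.
  set x := N `^ (k%:R)^-1. set y := N `^ (k.+1%:R)^-1.
  have hB := stepL (c0:=c0) (x:=x) (y:=y) (k:=k).
  have {}hB : 0 <= k%:R / c0 * x + 1 - k.+1%:R / c0 * y.
    apply: hB => //; first by apply: le_trans c03; lra.
      exact: powR_ge0. exact: powR_ge0.
    by rewrite /x /y !powK.
  have hSB := mulr_ge0 S0 hB.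
  have e : k%:R / c0 * x * S - N - k%:R * S -
     (k.+1%:R / c0 * y * S - N - k.+1%:R * S) =
     S * (k%:R / c0 * x + 1 - k.+1%:R / c0 * y).
    rewrite -[k.+1]addn1 natrD; ring.
  lra.
set kf := key i Q.
set s := undup (map kf (enum X)).
pose Xk q := [set r in X | kf r == q].
pose v q := if [pick r in X | kf r == q] is Some r then stp D i r t else t.
have hv q r : r \in X -> kf r = q -> stp D i r t = v q.
  move=> rX kr; rewrite /v; case: pickP => [r0 /andP[r0X /eqP kr0]|none].
    by apply: stp_key; rewrite -/Q -/kf kr kr0.
  by have := none r; rewrite /= rX kr eqxx.
have hvs q : q \in s -> sz (v q) = (sz t + size Q)%N.
  rewrite mem_undup => /mapP[r rX ->]; rewrite -(hv _ r) ?sz_stp //.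
  by rewrite -mem_enum.
have hC : Cst k.+1 X t = \sum_(q <- s) Cst k (Xk q) (v q).
  rewrite /Cst (part_set _ _ kf); apply: eq_bigr => q _; apply: eq_bigr => r.
  by rewrite inE => /andP[rX /eqP kr]; rewrite iterSr (hv q r).
have hS : Suc k.+1 X t = \sum_(q <- s) Suc k (Xk q) (v q).
  rewrite /Suc (part_set _ _ kf); apply: eq_bigr => q _; apply: eq_bigr => r.
  by rewrite inE => /andP[rX /eqP kr]; rewrite /succ iterSr (hv q r).
set N : R := #|X|%:R.
have N0 : 0 <= N by rewrite ler0n.
have hN : N = \sum_(q <- s) #|Xk q|%:R.
  rewrite /N -sumr_const (part_set _ _ kf); apply: eq_bigr => q _.
  by rewrite sumr_const.
rewrite /Claim hC hS /G.
apply: (sum_ineq (Nk := fun q => #|Xk q|%:R)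
   (x := fun q => #|Xk q|%:R `^ (k%:R)^-1) (c := (size Q)%:R)).
- exact: c0p.
- exact: powR_ge0.
- by rewrite powK.
- exact: hN.
- move=> q qs; split.
  + exact: powR_ge0.
  + exact: Suc_ge0.
  + by rewrite powK ?ler0n // Suc_le.
  + by have := IH (Xk q) (v q); rewrite /Claim /G hvs // natrD.
have hs := keys_size i Q X.
have hs' : (size s)%:R <= c0 * (size Q)%:R.
  apply: (@le_trans _ _ (3 * (size Q)%:R)); last first.
    by apply: ler_wpM2r; rewrite ?ler0n.
  have : (size s <= 3 * size Q)%N by move: hs Qn0; rewrite -/kf -/s; lia.
  by rewrite -(ler_nat R) natrM.
have e : N * (size Q)%:R = c0 * (size Q)%:R * (N / c0).
  by field; rewrite gt_eqF.
rewrite e; apply: ler_wpM2r => //; exact: divr_ge0 N0 (ltW c0p).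
Qed.

Lemma claim_all k X t : (1 <= k)%N -> Claim k X t.
Proof.
elim: k X t => [//|k IH] X t _.
case: k IH => [|k] IH; first exact: base.
by apply: step => // X' t'; apply: IH.
Qed.

End Main.

Lemma run_iter n (D : det_alg n) (i r : 'I_n) k :
  run D (tperm i r) i k = iter k (stp D i r) [::].
Proof. by elim: k => [//|k IH] /=; rewrite IH. Qed.

Lemma sumT (R : nmodType) n (F : 'I_n -> R) :
  \sum_(r in [set: 'I_n]%SET) F r = \sum_r F r.
Proof. by apply: eq_bigl => r; rewrite inE. Qed.

Lemma det_bound (R : realType) n (D : det_alg n) (i : 'I_n) k : (1 <= k)%N ->
  (k%:R / (4 * expR 1) * (n%:R `^ (k%:R)^-1) - k%:R) *
    (\sum_r ((succeeds D k (tperm i r) i)%:R : R)) - n%:R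
  <= \sum_r ((cost D k (tperm i r) i)%:R : R).
Proof.
move=> k1.
have c03 : 3 <= 4 * expR 1 :> R.
  have := expR_ge1Dx (1 : R); lra.
have := claim_all D i c03 [set: 'I_n]%SET [::] k1.
rewrite /Claim /G /Cst /Suc cardsT card_ord /= mulr0 subr0 !sumT.
have -> : \sum_r ((cost D k (tperm i r) i)%:R : R) =
          \sum_r (sz (iter k (stp D i r) [::]))%:R.
  by apply: eq_bigr => r _; rewrite /cost run_iter.
have -> : \sum_r ((succeeds D k (tperm i r) i)%:R : R) =
          \sum_r (succ D i k r [::])%:R.
  by apply: eq_bigr => r _; rewrite /succeeds /succ run_iter.
move=> h; apply: le_trans h; rewrite le_eqVlt; apply/orP; left; apply/eqP; ring.
Qed.

Local Open Scope classical_set_scope.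

Theorem proposition3 (R : realType) (d : measure_display) (Omega : measurableType d)
    (P : probability Omega R) (n k : nat) (p : R) (A : Omega -> det_alg n) :
  (1 < n)%N -> (1 <= k)%N -> (k <= up_log 2 n)%N ->
  0 <= p -> p <= 1 ->
  (forall (s : 'S_n) (i : 'I_n),
      measurable [set w | succeeds (A w) k s i]) ->
  (forall (s : 'S_n) (i : 'I_n),
      measurable_fun setT (fun w => ((cost (A w) k s i)%:R : R))) ->
  (forall (s : 'S_n) (i : 'I_n),
      (p%:E <= P [set w | succeeds (A w) k s i])%E) ->
  exists (s : 'S_n) (i : 'I_n),
    ((k%:R / (4 * expR 1) * p * (n%:R `^ (k%:R)^-1) - 1 - p * k%:R)%:E
      <= \int[P]_w ((cost (A w) k s i)%:R : R)%:E)%E.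
Proof.
move=> n1 k1 _ p0 p1 mE mC hP.
have n0 : (0 < n)%N by apply: ltn_trans n1.
pose i : 'I_n := Ordinal n0.
pose al : R := k%:R / (4 * expR 1) * (n%:R `^ (k%:R)^-1) - k%:R.
have Beq : k%:R / (4 * expR 1) * p * (n%:R `^ (k%:R)^-1) - 1 - p * k%:R = al * p - 1.
  by rewrite /al; ring.
rewrite Beq.
pose I r := (\int[P]_w ((cost (A w) k (tperm i r) i)%:R : R)%:E)%E.
have I0 r : (0 <= I r)%E by apply: integral_ge0 => w _; rewrite lee_fin ler0n.
have [al0|aln] := leP 0 al; last first.
  exists (tperm i i), i; apply: le_trans (I0 i); rewrite lee_fin.
  have : al * p <= 0 by apply: mulr_le0_ge0 => //; exact: ltW.
  lra.
pose E r := [set w | succeeds (A w) k (tperm i r) i].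
pose fs r w : \bar R := ((succeeds (A w) k (tperm i r) i)%:R : R)%:E.
pose fc r w : \bar R := ((cost (A w) k (tperm i r) i)%:R : R)%:E.
have fsE r : fs r = fun w => (\1_(E r) w)%:E.
  apply/funext => w; rewrite /fs indicE; case: (boolP (succeeds _ _ _ _)) => h.
    by rewrite mem_set.
  by rewrite memNset //; exact/negP.
have mfs r : measurable_fun setT (fs r).
  rewrite fsE; exact: ((measurable_EFinP setT (\1_(E r) : Omega -> R)).2
    (measurable_indic (mE (tperm i r) i))).
have mfc r : measurable_fun setT (fc r).
  exact: ((measurable_EFinP setT (fun w => (cost (A w) k (tperm i r) i)%:R : R)).2 (mC _ _)).
have fs0 r w : (0 <= fs r w)%E by rewrite lee_fin ler0n.
have fc0 r w : (0 <= fc r w)%E by rewrite lee_fin ler0n.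
have int_fs r : (\int[P]_w fs r w = P (E r))%E.
  rewrite fsE integral_indic //; last exact: mE.
  by rewrite setIT.
have pw w : (al%:E * (\sum_r fs r w) <= \sum_r fc r w + (n%:R)%:E)%E.
  rewrite /fs /fc !sumEFin -EFinM -EFinD lee_fin.
  have := @det_bound R n (A w) i k k1; rewrite -/al; lra.
have h1 : (\int[P]_w (al%:E * \sum_r fs r w) <= \int[P]_w (\sum_r fc r w + (n%:R)%:E))%E.
  apply: ge0_le_integral => //.
  - move=> w _; apply: mule_ge0; rewrite ?lee_fin //; apply: sume_ge0 => r _; exact: fs0.
  - by apply: measurable_funeM; apply: emeasurable_sum.
  - by apply: emeasurable_funD; [apply: emeasurable_sum|exact: measurable_cst].
have e1 : (\int[P]_w (al%:E * \sum_r fs r w) = al%:E * \sum_r P (E r))%E.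
  rewrite ge0_integralZl //.
  - rewrite ge0_integral_sum //; congr (_ * _)%E; apply: eq_bigr => r _; exact: int_fs.
  - exact: emeasurable_sum.
  - by move=> w _; apply: sume_ge0 => r _; exact: fs0.
have e2 : (\int[P]_w (\sum_r fc r w + (n%:R)%:E) = \sum_r I r + (n%:R)%:E)%E.
  rewrite ge0_integralD //.
  - rewrite ge0_integral_sum // integral_cst //; congr (_ + _)%E.
    by rewrite -[RHS]mule1; congr (_ * _)%E; exact: probability_setT.
  - by move=> w _; apply: sume_ge0 => r _; exact: fc0.
  - exact: emeasurable_sum.
have key : ((al * (n%:R * p))%:E <= \sum_r I r + (n%:R)%:E)%E.
  have hp : ((n%:R * p)%:E <= \sum_r P (E r))%E.
    apply: (@le_trans _ _ (\sum_r p%:E)%E); last by apply: lee_sum => r _; exact: hP.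
    by rewrite sumEFin sumr_const card_ord mulr_natl.
  rewrite EFinM -e2; apply: (@le_trans _ _ (al%:E * \sum_r P (E r))%E).
    by apply: lee_wpmul2l; rewrite ?lee_fin.
  by rewrite -e1.
have [[r hr]|none] := pselect (exists r, ((al * p - 1)%:E <= I r)%E).
  by exists (tperm i r), i.
exfalso.
have hlt r : (I r < (al * p - 1)%:E)%E.
  by rewrite ltNge; apply/negP => h; apply: none; exists r.
have fin r : I r = (fine (I r))%:E.
  by rewrite fineK // ge0_fin_numE ?I0 // (lt_trans (hlt r)) ?ltry.
move: key; rewrite (eq_bigr _ (fun r _ => fin r)) sumEFin -EFinD lee_fin => key.
have hs : \sum_r fine (I r) < \sum_(r : 'I_n) (al * p - 1).
  apply: ltr_sum.
    by apply/hasP; exists i; rewrite ?mem_index_enum.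
  by move=> r _; rewrite -lte_fin -fin.
move: hs; rewrite sumr_const card_ord -mulr_natl => hs.
lra.
Qed.
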